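(* Under the standing assumptions below, let $\pi\in\Pi$ with $\mathbb A^*_\pi>0$, let $\delta>0$, and let $\tilde\pi$ be an optimal solution of the trust-region subproblem $$\max_{\pi'\in\Pi} L_{\pi}(\pi')\quad\text{s.t.}\quad \sum_{s}\rho_{\pi}(s)\,D_{TV}(\pi(\cdot|s)\,\|\,\pi'(\cdot|s))\le\delta.$$ Let $r=\dfrac{\eta(\tilde\pi)-\eta(\pi)}{L_\pi(\tilde\pi)-L_\pi(\pi)}$, $p_0=\min_s\rho_0(s)$ and $\bar A=\max_{s,a}|A_\pi(s,a)|$. Then $$r\ \ge\ \min\left(1-\frac{4\bar A\gamma\delta^2}{p_0^2(1-\gamma)^2\,\mathbb A^*_\pi},\ 1-\frac{4\bar A\gamma\delta}{p_0^2(1-\gamma)^3\,\mathbb A^*_\pi}\right).$$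
   Context: Consider an infinite-horizon discounted Markov decision process $(\mathcal S,\mathcal A,P,r,\rho_0,\gamma)$ with finite state space $\mathcal S$, finite action space $\mathcal A$, transition probabilities $P(s'|s,a)$, bounded reward function $r:\mathcal S\times\mathcal A\to\mathbb R$, initial-state distribution $\rho_0$ with $\rho_0(s)>0$ for all $s\in\mathcal S$, and discount factor $\gamma\in(0,1)$. A policy $\pi$ assigns to each state $s$ a probability distribution $\pi(\cdot|s)$ on $\mathcal A$; $\Pi$ denotes the set of all policies. The total expected reward is $\eta(\pi)=\mathbb E_\pi[\sum_{t=0}^\infty\gamma^t r(s_t,a_t)]$, where $s_0\sim\rho_0$, $a_t\sim\pi(\cdot|s_t)$, $s_{t+1}\sim P(\cdot|s_t,a_t)$. The unnormalized discounted visitation frequency is $\rho_\pi(s)=\sum_{t=0}^\infty\gamma^t\mathbb P(s_t=s\mid\pi)$. $Q_\pi(s,a)=\mathbb E_\pi[\sum_{l\ge0}\gamma^l r(s_l,a_l)\mid s_0=s,a_0=a]$, $V_\pi(s)=\mathbb E_\pi[\sum_{l\ge0}\gamma^l r(s_l,a_l)\mid s_0=s]$, and the advantage is $A_\pi(s,a)=Q_\pi(s,a)-V_\pi(s)$. The surrogate function is $L_\pi(\tilde\pi)=\eta(\pi)+\sum_s\rho_\pi(s)\sum_a\tilde\pi(a|s)A_\pi(s,a)$. The policy advantage of $\pi'$ with respect to $\pi$ is $\mathbb A_\pi(\pi')=\sum_s\rho_\pi(s)\sum_a\pi'(a|s)A_\pi(s,a)$, and $\mathbb A^*_\pi=\max_{\pi'\in\Pi}\mathbb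 A_\pi(\pi')$. The total variation distance is $D_{TV}(p\|q)=\frac12\sum_x|p(x)-q(x)|$. *)

(* Defs.v *)
From Stdlib Require Import Reals ClassicalEpsilon.
From mathcomp Require Import all_boot.
Set Implicit Arguments.
Unset Strict Implicit.

Local Open Scope R_scope.

Definition rsum {T : finType} (F : T -> R) : R :=
  \big[Rplus/R0]_(x : T) F x.

(* Value of a series sum_{t>=0} u t (chosen via classical choice; meaningful
   when the series converges, which is always the case below). *)
Definition series_sum (u : nat -> R) : R :=
  epsilon (inhabits R0)
    (fun l => Un_cv (fun N => sum_f_R0 u N) l).

Section MDP.
Variables (S A : finType).
Variable P : S -> A -> S -> R.      (* P s a s' = P(s'|s,a) *)
Variable rw : S -> A -> R.
Variable rho0 : S -> R.
Variable gamma : R.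

Definition valid_mdp : Prop :=
  (forall s a s', 0 <= P s a s') /\
  (forall s a, rsum (fun s' => P s a s') = 1) /\
  (forall s, 0 < rho0 s) /\ rsum rho0 = 1 /\
  (exists B, forall s a, Rabs (rw s a) <= B) /\
  0 < gamma < 1.

(* A policy: pi s a = pi(a|s). *)
Definition is_policy (pi : S -> A -> R) : Prop :=
  (forall s a, 0 <= pi s a) /\ (forall s, rsum (fun a => pi s a) = 1).

(* Joint law of (s_t, a_t) under pi, starting from the law nu of (s_0, a_0). *)
Fixpoint sa_dist (pi : S -> A -> R) (nu : S -> A -> R) (t : nat) : S -> A -> R :=
  match t with
  | O => nu
  | t'.+1 => fun s' a' =>
      rsum (fun s => rsum (fun a => sa_dist pi nu t' s a * P s a s')) * pi s' a'
  end.

Definition disc_return (pi : S -> A -> R) (nu : S -> A -> R) : R :=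
  series_sum (fun t => gamma ^ t *
    rsum (fun s => rsum (fun a => sa_dist pi nu t s a * rw s a))).

Definition eta (pi : S -> A -> R) : R :=
  disc_return pi (fun s a => rho0 s * pi s a).

(* Unnormalized discounted visitation frequency. *)
Definition rho (pi : S -> A -> R) (s : S) : R :=
  series_sum (fun t => gamma ^ t *
    rsum (fun a => sa_dist pi (fun s0 a0 => rho0 s0 * pi s0 a0) t s a)).

Definition Qf (pi : S -> A -> R) (s : S) (a : A) : R :=
  disc_return pi (fun s0 a0 => if (s0 == s) && (a0 == a) then 1 else 0).

Definition Vf (pi : S -> A -> R) (s : S) : R :=
  disc_return pi (fun s0 a0 => if s0 == s then pi s a0 else 0).

Definition Adv (pi : S -> A -> R) (s : S) (a : A) : R := Qf pi s a - Vf pi s.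

Definition surrogate (pi pi' : S -> A -> R) : R :=
  eta pi + rsum (fun s => rho pi s * rsum (fun a => pi' s a * Adv pi s a)).

Definition policy_adv (pi pi' : S -> A -> R) : R :=
  rsum (fun s => rho pi s * rsum (fun a => pi' s a * Adv pi s a)).

Definition dTV (p q : A -> R) : R := / 2 * rsum (fun a => Rabs (p a - q a)).

Definition exp_tv (pi pi' : S -> A -> R) : R :=
  rsum (fun s => rho pi s * dTV (pi s) (pi' s)).

End MDP.

(* Main.v *)
From HB Require Import structures.
Require Import Defs.
From Stdlib Require Import Reals Lra FunctionalExtensionality ClassicalEpsilon.
From mathcomp Require Import all_boot.
Set Implicit Arguments.
Unset Strict Implicit.
Local Open Scope R_scope.

HB.instance Definition _ := Monoid.isComLaw.Build R R0 Rplus (fun x y z => esym (Rplus_assoc x y z)) Rplus_comm Rplus_0_l.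

Lemma rsum_ext (T : finType) (f g : T -> R) : (forall x, f x = g x) -> rsum f = rsum g.
Proof. move=> H; rewrite /rsum; apply: eq_bigr => x _; exact: H. Qed.

Lemma rsum_add (T : finType) (f g : T -> R) : rsum (fun x => f x + g x) = rsum f + rsum g.
Proof. rewrite /rsum; exact: big_split. Qed.

Lemma rsum_scal (T : finType) (c : R) (f : T -> R) : rsum (fun x => c * f x) = c * rsum f.
Proof. rewrite /rsum. apply: (big_rec2 (fun y1 y2 => y1 = c * y2)); first by ring.
move=> i y1 y2 _ ->; ring. Qed.

Lemma rsum_scalr (T : finType) (c : R) (f : T -> R) : rsum (fun x => f x * c) = rsum f * c.
Proof. rewrite -(Rmult_comm c) -rsum_scal; apply: rsum_ext => x; ring. Qed.

Lemma rsum_opp (T : finType) (f : T -> R) : rsum (fun x => - f x) = - rsum f.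
Proof. have -> : - rsum f = -1 * rsum f by ring. rewrite -rsum_scal; apply: rsum_ext => x; ring. Qed.

Lemma rsum_minus (T : finType) (f g : T -> R) : rsum (fun x => f x - g x) = rsum f - rsum g.
Proof. rewrite /Rminus -rsum_opp -rsum_add; done. Qed.

Lemma rsum_le (T : finType) (f g : T -> R) : (forall x, f x <= g x) -> rsum f <= rsum g.
Proof. move=> H; rewrite /rsum. apply: (big_rec2 (fun y1 y2 => y1 <= y2)); first lra.
move=> i y1 y2 _ Hy; have := H i; lra. Qed.

Lemma rsum_0 (T : finType) : rsum (fun _ : T => 0) = 0.
Proof. rewrite /rsum; apply: big1 => //. Qed.

Lemma rsum_ge0 (T : finType) (f : T -> R) : (forall x, 0 <= f x) -> 0 <= rsum f.
Proof. move=> H; rewrite -(rsum_0 T); exact: rsum_le. Qed.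

Lemma rsum_abs (T : finType) (f : T -> R) : Rabs (rsum f) <= rsum (fun x => Rabs (f x)).
Proof. rewrite /rsum. apply: (big_rec2 (fun y1 y2 => Rabs y1 <= y2)).
  rewrite Rabs_R0; lra.
move=> i y1 y2 _ Hy; have := Rabs_triang (f i) y1; lra. Qed.

Lemma rsum_exch (T U : finType) (F : T -> U -> R) :
  rsum (fun x => rsum (fun y => F x y)) = rsum (fun y => rsum (fun x => F x y)).
Proof. rewrite /rsum; exact: exchange_big. Qed.

Lemma rsum_single (T : finType) (f : T -> R) (x0 : T) :
  (forall x, 0 <= f x) -> f x0 <= rsum f.
Proof. move=> H; rewrite /rsum (bigD1 x0) //=.
have : 0 <= \big[Rplus/R0]_(i | i != x0) f i.
  apply: (big_rec (fun y => 0 <= y)); first lra. move=> i y _ Hy; have := H i; lra.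
lra. Qed.

Lemma rsum_delta (T : finType) (f : T -> R) (y : T) :
  rsum (fun x => if x == y then f x else 0) = f y.
Proof. rewrite /rsum (bigD1 y) //= eqxx big1 ?Rplus_0_r // => i /negbTE ->; done. Qed.

Lemma rsum_delta' (T : finType) (f : T -> R) (y : T) :
  rsum (fun x => (if x == y then 1 else 0) * f x) = f y.
Proof. rewrite -(rsum_delta f y); apply: rsum_ext => x; case: (x == y); ring. Qed.

Lemma abs_le_rsum (T : finType) (f : T -> R) (x0 : T) : Rabs (f x0) <= rsum (fun x => Rabs (f x)).
Proof. exact: (@rsum_single T (fun x => Rabs (f x)) x0 (fun x => Rabs_pos (f x))). Qed.

Lemma series_sum_spec (u : nat -> R) (l : R) : Un_cv (sum_f_R0 u) l -> series_sum u = l.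
Proof. move=> H; rewrite /series_sum.
have Hex : exists l, Un_cv (fun N => sum_f_R0 u N) l by exists l.
have := epsilon_spec (inhabits R0) _ Hex => H2. exact: (UL_sequence _ _ _ H2 H). Qed.

Lemma geom_cv (g : R) : 0 <= g < 1 -> Un_cv (sum_f_R0 (fun t => g ^ t)) (/ (1 - g)).
Proof. move=> Hg. have H := GP_infinite g.
have Ha : Rabs g < 1 by rewrite Rabs_right; lra.
move: (H Ha) => H1 eps He; case: (H1 eps He) => N HN; exists N => n Hn.
have := HN n Hn. have -> : sum_f_R0 (fun n0 : nat => 1 * g ^ n0) n = sum_f_R0 (fun t => g ^ t) n.
  by apply PartSum.sum_eq; intros i _; ring.
done. Qed.

Lemma cv_const (c : R) : Un_cv (fun _ => c) c.
Proof. move=> eps He; exists O => n _; rewrite /Rdist Rminus_diag Rabs_R0; lra. Qed.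

Lemma cv_ext (u v : nat -> R) (l : R) : (forall n, u n = v n) -> Un_cv u l -> Un_cv v l.
Proof. move=> E H eps He; case: (H eps He) => N HN; exists N => n Hn; rewrite -E; exact: HN. Qed.

Lemma cv_scal (c : R) (u : nat -> R) (l : R) : Un_cv u l -> Un_cv (fun n => c * u n) (c * l).
Proof. move=> H; exact: (CV_mult _ _ _ _ (cv_const c) H). Qed.

Lemma sum_scal (c : R) (u : nat -> R) N : sum_f_R0 (fun t => c * u t) N = c * sum_f_R0 u N.
Proof. rewrite scal_sum; apply PartSum.sum_eq; intros i _; ring. Qed.

Lemma series_cv (g C : R) (u : nat -> R) : 0 <= g < 1 ->
  (forall t, Rabs (u t) <= C * g ^ t) -> Un_cv (sum_f_R0 u) (series_sum u).
Proof. move=> Hg Hu.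
have HC : 0 <= C. have := Hu O; have := Rabs_pos (u O); rewrite /= Rmult_1_r; lra.
suff [l Hl] : exists l, Un_cv (sum_f_R0 u) l by rewrite (series_sum_spec Hl).
have Hgeo : Un_cv (sum_f_R0 (fun t => C * g ^ t)) (C * / (1 - g)).
  apply: (cv_ext _ (cv_scal C (geom_cv Hg))) => n; by rewrite sum_scal.
have Hgeo2 : Un_cv (sum_f_R0 (fun t => 2 * (C * g ^ t))) (2 * (C * / (1 - g))).
  apply: (cv_ext _ (cv_scal 2 Hgeo)) => n; by rewrite (sum_scal 2 (fun t => C * g ^ t)).
have Hb : forall n, 0 <= u n + C * g ^ n <= 2 * (C * g ^ n).
  move=> n; have h0 := Hu n; have h1 := Rle_abs (u n); have h2 := Rle_abs (- u n).
  rewrite Rabs_Ropp in h2; split; lra.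
have [l1 Hl1] := Rseries_CV_comp (fun t => u t + C * g ^ t) (fun t => 2 * (C * g ^ t))
   Hb (exist _ _ Hgeo2).
exists (l1 - C * / (1 - g)).
apply: (cv_ext _ (CV_minus _ _ _ _ Hl1 Hgeo)) => n.
rewrite -minus_sum; apply PartSum.sum_eq; intros i _; ring. Qed.


Lemma cv_rsum (T : finType) (u : T -> nat -> R) (l : T -> R) :
  (forall i, Un_cv (u i) (l i)) -> Un_cv (fun N => rsum (fun i => u i N)) (rsum l).
Proof. move=> H; rewrite /rsum; elim: (index_enum T) => [|x r IH].
  rewrite [in X in Un_cv _ X]big_nil.
  apply: (cv_ext _ (cv_const _)) => n; by rewrite !big_nil.
rewrite [in X in Un_cv _ X]big_cons.
apply: (cv_ext _ (CV_plus _ _ _ _ (H x) IH)) => n; by rewrite !big_cons. Qed.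

Lemma sum_rsum (T : finType) (u : T -> nat -> R) N :
  sum_f_R0 (fun t => rsum (fun i => u i t)) N = rsum (fun i => sum_f_R0 (u i) N).
Proof. elim: N => [|N IH] //=. rewrite IH -rsum_add //. Qed.

Lemma series_rsum (T : finType) (g : R) (C : T -> R) (u : T -> nat -> R) : 0 <= g < 1 ->
  (forall i t, Rabs (u i t) <= C i * g ^ t) ->
  series_sum (fun t => rsum (fun i => u i t)) = rsum (fun i => series_sum (u i)).
Proof. move=> Hg Hu; apply: series_sum_spec.
apply: (cv_ext _ (cv_rsum (fun i => series_cv Hg (Hu i)))) => n; by rewrite sum_rsum. Qed.

Lemma series_scal (g C c : R) (u : nat -> R) : 0 <= g < 1 ->
  (forall t, Rabs (u t) <= C * g ^ t) ->
  series_sum (fun t => c * u t) = c * series_sum u.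
Proof. move=> Hg Hu; apply: series_sum_spec.
apply: (cv_ext _ (cv_scal c (series_cv Hg Hu))) => n; by rewrite sum_scal. Qed.

Lemma series_scalr (g C c : R) (u : nat -> R) : 0 <= g < 1 ->
  (forall t, Rabs (u t) <= C * g ^ t) ->
  series_sum (fun t => u t * c) = series_sum u * c.
Proof. move=> Hg Hu. rewrite Rmult_comm -(series_scal c Hg Hu).
f_equal; apply: functional_extensionality => t; ring. Qed.

Lemma sum_shift (u : nat -> R) N : sum_f_R0 u (S N) = u O + sum_f_R0 (fun t => u (S t)) N.
Proof. elim: N => [|N IH] /=; first by []. rewrite /= in IH; rewrite IH; ring. Qed.

Lemma series_shift (g C : R) (u : nat -> R) : 0 <= g < 1 ->
  (forall t, Rabs (u t) <= C * g ^ t) ->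
  series_sum u = u O + series_sum (fun t => u (S t)).
Proof. move=> Hg Hu.
have H := series_cv Hg Hu.
have H1 : Un_cv (sum_f_R0 (fun t => u (S t))) (series_sum u - u O).
  have H2 := CV_minus _ _ _ _ (CV_shift' _ 1 _ H) (cv_const (u O)).
  apply: (cv_ext _ H2) => n /=. rewrite Nat.add_1_r sum_shift; ring.
rewrite (series_sum_spec H1); ring. Qed.


Definition Cn (S A : finType) (nu : S -> A -> R) := rsum (fun s => rsum (fun a => Rabs (nu s a))).
Definition stoch (S A : finType) (P : S -> A -> S -> R) :=
  (forall s a s', 0 <= P s a s') /\ (forall s a, rsum (fun s' => P s a s') = 1).
Definition occ (S A : finType) P gamma pi (nu : S -> A -> R) s a :=
  series_sum (fun t => gamma ^ t * @sa_dist S A P pi nu t s a).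

Lemma abs_le_rsum2 (S A : finType) (F : S -> A -> R) s a :
  Rabs (F s a) <= rsum (fun s => rsum (fun a => Rabs (F s a))).
Proof. apply: Rle_trans; first exact: (abs_le_rsum (F s) a).
apply: (@rsum_single S (fun s => rsum (fun a => Rabs (F s a))) s) => x.
apply: rsum_ge0 => y; exact: Rabs_pos. Qed.

Lemma rsum_pol (S A : finType) (pi : S -> A -> R) (X : S -> R) : is_policy pi ->
  rsum (fun s' => rsum (fun a' => X s' * pi s' a')) = rsum X.
Proof. move=> [_ H1]; apply: rsum_ext => s'; rewrite rsum_scal H1; ring. Qed.

Lemma rsum_P (S A : finType) (P : S -> A -> S -> R) (G : S -> A -> R) : stoch P ->
  rsum (fun s' => rsum (fun s => rsum (fun a => G s a * P s a s'))) = rsum (fun s => rsum (fun a => G s a)).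
Proof. move=> [_ H1]; rewrite rsum_exch; apply: rsum_ext => s; rewrite rsum_exch.
apply: rsum_ext => a; rewrite rsum_scal H1; ring. Qed.

Lemma mass_step (S A : finType) P pi (nu : S -> A -> R) t : stoch P -> is_policy pi ->
  Cn (sa_dist P pi nu t.+1) <= Cn (sa_dist P pi nu t).
Proof. move=> HP Hpi; rewrite /Cn /=.
set m := sa_dist P pi nu t.
apply: Rle_trans.
  apply: (@rsum_le _ _ (fun s' => rsum (fun a' => rsum (fun s => rsum (fun a => Rabs (m s a) * P s a s')) * pi s' a'))) => s'.
  apply: rsum_le => a'. rewrite Rabs_mult (Rabs_pos_eq (pi s' a')); last by case: Hpi.
  apply: Rmult_le_compat_r; first by case: Hpi.
  apply: Rle_trans; first exact: rsum_abs. apply: rsum_le => s.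
  apply: Rle_trans; first exact: rsum_abs. apply: rsum_le => a.
  rewrite Rabs_mult (Rabs_pos_eq (P s a s')); [exact: Rle_refl | by case: HP].
rewrite (rsum_pol _ Hpi) (rsum_P _ HP); exact: Rle_refl. Qed.

Lemma mass_bound (S A : finType) P pi (nu : S -> A -> R) t : stoch P -> is_policy pi ->
  Cn (sa_dist P pi nu t) <= Cn nu.
Proof. move=> HP Hpi; elim: t => [|t IH]; first exact: Rle_refl.
exact: (Rle_trans _ _ _ (mass_step nu t HP Hpi) IH). Qed.

Lemma m_bound (S A : finType) P pi (nu : S -> A -> R) t s a : stoch P -> is_policy pi ->
  Rabs (sa_dist P pi nu t s a) <= Cn nu.
Proof. move=> HP Hpi; apply: Rle_trans; first exact: abs_le_rsum2.
exact: mass_bound. Qed.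

Lemma term_bound (S A : finType) P pi (nu : S -> A -> R) g c t s a : stoch P -> is_policy pi ->
  0 <= g -> Rabs (g ^ t * sa_dist P pi nu t s a * c) <= (Cn nu * Rabs c) * g ^ t.
Proof. move=> HP Hpi Hg. rewrite !Rabs_mult (Rabs_pos_eq (g ^ t)); last exact: pow_le.
have := m_bound nu t s a HP Hpi; have := pow_le g t Hg; have := Rabs_pos c.
move=> h1 h2 h3. have : Rabs (sa_dist P pi nu t s a) * Rabs c <= Cn nu * Rabs c by apply: Rmult_le_compat_r.
nra. Qed.

Lemma term_bound1 (S A : finType) P pi (nu : S -> A -> R) g t s a : stoch P -> is_policy pi ->
  0 <= g -> Rabs (g ^ t * sa_dist P pi nu t s a) <= (Cn nu) * g ^ t.
Proof. move=> HP Hpi Hg. move: (term_bound nu 1 t s a HP Hpi Hg).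
by rewrite Rabs_R1 !Rmult_1_r. Qed.


Lemma bound1 (S A : finType) P pi (nu : S -> A -> R) g (c : A -> R) t s : stoch P -> is_policy pi ->
  0 <= g -> Rabs (rsum (fun a => g ^ t * sa_dist P pi nu t s a * c a)) <= rsum (fun a => Cn nu * Rabs (c a)) * g ^ t.
Proof. move=> HP Hpi Hg. apply: Rle_trans; first exact: rsum_abs.
rewrite -rsum_scalr; apply: rsum_le => a; exact: term_bound. Qed.

Lemma bound2 (S A : finType) P pi (nu : S -> A -> R) g (c : S -> A -> R) t : stoch P -> is_policy pi ->
  0 <= g -> Rabs (rsum (fun s => rsum (fun a => g ^ t * sa_dist P pi nu t s a * c s a)))
   <= rsum (fun s => rsum (fun a => Cn nu * Rabs (c s a))) * g ^ t.
Proof. move=> HP Hpi Hg. apply: Rle_trans; first exact: rsum_abs.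
rewrite -rsum_scalr; apply: rsum_le => s; exact: bound1. Qed.

Lemma disc_occ (S A : finType) P f g pi (nu : S -> A -> R) : stoch P -> is_policy pi -> 0 <= g < 1 ->
  disc_return P f g pi nu = rsum (fun s => rsum (fun a => occ P g pi nu s a * f s a)).
Proof. move=> HP Hpi Hg. rewrite /disc_return.
have -> : (fun t => g ^ t * rsum (fun s => rsum (fun a => sa_dist P pi nu t s a * f s a))) =
   (fun t => rsum (fun s => rsum (fun a => g ^ t * sa_dist P pi nu t s a * f s a))).
  apply: functional_extensionality => t; rewrite -rsum_scal; apply: rsum_ext => s.
  rewrite -rsum_scal; apply: rsum_ext => a; ring.
have Hg0 : 0 <= g by case: Hg.
rewrite (@series_rsum _ _ (fun s => rsum (fun a => Cn nu * Rabs (f s a))) _ Hg); last first.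
  move=> s t; exact: bound1.
apply: rsum_ext => s.
rewrite (@series_rsum _ _ (fun a => Cn nu * Rabs (f s a)) _ Hg); last first.
  move=> a t; exact: term_bound.
apply: rsum_ext => a. rewrite /occ. apply: (@series_scalr _ (Cn nu) _ _ Hg) => t; exact: term_bound1.
Qed.

Lemma sa_dist_semi (S A : finType) P pi (nu : S -> A -> R) t :
  sa_dist P pi nu t.+1 = sa_dist P pi (sa_dist P pi nu 1) t.
Proof. elim: t => [|t IH]; first by [].
transitivity (fun s' a' => rsum (fun s => rsum (fun a => sa_dist P pi nu t.+1 s a * P s a s')) * pi s' a'); first by [].
by rewrite IH. Qed.

Lemma occ_shift (S A : finType) P g pi (nu : S -> A -> R) s a : stoch P -> is_policy pi -> 0 <= g < 1 ->
  occ P g pi nu s a = nu s a + g * occ P g pi (sa_dist P pi nu 1) s a.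
Proof. move=> HP Hpi Hg. have Hg0 : 0 <= g by case: Hg.
rewrite /occ (@series_shift _ (Cn nu) _ Hg); last by move=> t; exact: term_bound1.
change (g ^ 0 * sa_dist P pi nu 0 s a) with (1 * nu s a). rewrite Rmult_1_l; f_equal.
rewrite -(@series_scal _ (Cn (sa_dist P pi nu 1)) _ _ Hg); last by move=> t; exact: term_bound1.
f_equal; apply: functional_extensionality => t. rewrite sa_dist_semi.
change (g ^ t.+1) with (g * g ^ t); ring. Qed.

Lemma occ_fwd (S A : finType) P g pi (nu : S -> A -> R) s' a' : stoch P -> is_policy pi -> 0 <= g < 1 ->
  occ P g pi nu s' a' = nu s' a' + g * rsum (fun s => rsum (fun a => occ P g pi nu s a * P s a s')) * pi s' a'.
Proof. move=> HP Hpi Hg. have Hg0 : 0 <= g by case: Hg.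
rewrite /occ (@series_shift _ (Cn nu) _ Hg); last by move=> t; exact: term_bound1.
rewrite /= Rmult_1_l; f_equal.
have -> : (fun t => g * g ^ t * (rsum (fun s => rsum (fun a => sa_dist P pi nu t s a * P s a s')) * pi s' a')) =
  (fun t => g * rsum (fun s => rsum (fun a => g ^ t * sa_dist P pi nu t s a * (P s a s' * pi s' a')))).
  apply: functional_extensionality => t.
  have E : forall s, rsum (fun a => g ^ t * sa_dist P pi nu t s a * (P s a s' * pi s' a')) =
     (g ^ t * pi s' a') * rsum (fun a => sa_dist P pi nu t s a * P s a s').
    move=> s; rewrite -rsum_scal; apply: rsum_ext => a; ring.
  rewrite (rsum_ext E) rsum_scal; ring.
rewrite (@series_scal _ (rsum (fun s => rsum (fun a => Cn nu * Rabs (P s a s' * pi s' a')))) _ _ Hg); last first.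
  move=> t; exact: bound2.
rewrite (@series_rsum _ _ (fun s => rsum (fun a => Cn nu * Rabs (P s a s' * pi s' a'))) _ Hg); last first.
  move=> s t; exact: bound1.
have -> : rsum (fun s => series_sum (fun t => rsum (fun a => g ^ t * sa_dist P pi nu t s a * (P s a s' * pi s' a'))))
  = rsum (fun s => rsum (fun a => series_sum (fun t => g ^ t * sa_dist P pi nu t s a) * P s a s') * pi s' a').
  apply: rsum_ext => s.
  rewrite (@series_rsum _ _ (fun a => Cn nu * Rabs (P s a s' * pi s' a')) _ Hg); last first.
    move=> a t; exact: term_bound.
  rewrite -rsum_scalr; apply: rsum_ext => a.
  rewrite (@series_scalr _ (Cn nu) _ _ Hg); last by move=> t; exact: term_bound1.
  ring.
by rewrite rsum_scalr Rmult_assoc. Qed.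


Lemma sa_dist_lin (S A I : finType) P pi (nu : S -> A -> R) (c : I -> R) (nus : I -> S -> A -> R) :
  (forall s a, nu s a = rsum (fun i => c i * nus i s a)) ->
  forall t s a, sa_dist P pi nu t s a = rsum (fun i => c i * sa_dist P pi (nus i) t s a).
Proof. move=> H; elim=> [|t IH] s' a' /=; first exact: H.
have E : rsum (fun i => c i * (rsum (fun s => rsum (fun a => sa_dist P pi (nus i) t s a * P s a s')) * pi s' a'))
   = rsum (fun i => c i * rsum (fun s => rsum (fun a => sa_dist P pi (nus i) t s a * P s a s'))) * pi s' a'.
  by rewrite -rsum_scalr; apply: rsum_ext => i; ring.
rewrite E; f_equal.
have E2 : forall i, c i * rsum (fun s => rsum (fun a => sa_dist P pi (nus i) t s a * P s a s'))
   = rsum (fun s => rsum (fun a => c i * sa_dist P pi (nus i) t s a * P s a s')).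
  move=> i; rewrite -rsum_scal; apply: rsum_ext => s; rewrite -rsum_scal; apply: rsum_ext => a; ring.
rewrite (rsum_ext E2) [RHS]rsum_exch; apply: rsum_ext => s; rewrite [RHS]rsum_exch; apply: rsum_ext => a.
rewrite IH -rsum_scalr; apply: rsum_ext => i; ring. Qed.

Lemma occ_lin (S A I : finType) P g pi (nu : S -> A -> R) (c : I -> R) (nus : I -> S -> A -> R) s a :
  stoch P -> is_policy pi -> 0 <= g < 1 ->
  (forall s a, nu s a = rsum (fun i => c i * nus i s a)) ->
  occ P g pi nu s a = rsum (fun i => c i * occ P g pi (nus i) s a).
Proof. move=> HP Hpi Hg H. have Hg0 : 0 <= g by case: Hg. rewrite /occ.
have -> : (fun t => g ^ t * sa_dist P pi nu t s a) = (fun t => rsum (fun i => c i * (g ^ t * sa_dist P pi (nus i) t s a))).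
  apply: functional_extensionality => t; rewrite (sa_dist_lin P pi H) -rsum_scal; apply: rsum_ext => i; ring.
rewrite (@series_rsum _ _ (fun i => Rabs (c i) * Cn (nus i)) _ Hg); last first.
  move=> i t; rewrite Rabs_mult Rmult_assoc; apply: Rmult_le_compat_l; first exact: Rabs_pos.
  exact: term_bound1.
apply: rsum_ext => i; apply: (@series_scal _ (Cn (nus i)) _ _ Hg) => t; exact: term_bound1. Qed.

Lemma sa_dist_ge0 (S A : finType) P pi (nu : S -> A -> R) t s a : stoch P -> is_policy pi ->
  (forall s a, 0 <= nu s a) -> 0 <= sa_dist P pi nu t s a.
Proof. move=> [HP _] [Hpi _] Hnu; elim: t s a => [|t IH] s' a' /=; first exact: Hnu.
apply: Rmult_le_pos; last exact: Hpi.
apply: rsum_ge0 => s; apply: rsum_ge0 => a; apply: Rmult_le_pos; [exact: IH | exact: HP]. Qed.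

Lemma occ_ge (S A : finType) P g pi (nu : S -> A -> R) s a : stoch P -> is_policy pi -> 0 <= g < 1 ->
  (forall s a, 0 <= nu s a) -> nu s a <= occ P g pi nu s a.
Proof. move=> HP Hpi Hg Hnu. have Hg0 : 0 <= g by case: Hg.
have Hc := @series_cv g (Cn nu) _ Hg (fun t => term_bound1 nu t s a HP Hpi Hg0).
have := @sum_incr _ O _ Hc. rewrite /= Rmult_1_l. apply.
move=> n; apply: Rmult_le_pos; [exact: pow_le | exact: sa_dist_ge0]. Qed.


Lemma rsum2_lin (S A I : finType) (c : I -> R) (O : I -> S -> A -> R) (f : S -> A -> R) :
  rsum (fun s1 => rsum (fun a1 => rsum (fun i => c i * O i s1 a1) * f s1 a1)) =
  rsum (fun i => c i * rsum (fun s1 => rsum (fun a1 => O i s1 a1 * f s1 a1))).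
Proof.
have -> : (fun s1 => rsum (fun a1 => rsum (fun i => c i * O i s1 a1) * f s1 a1)) =
   (fun s1 => rsum (fun i => rsum (fun a1 => c i * (O i s1 a1 * f s1 a1)))).
  apply: functional_extensionality => s1; rewrite -rsum_exch; apply: rsum_ext => a1.
  rewrite -rsum_scalr; apply: rsum_ext => i; ring.
rewrite rsum_exch; apply: rsum_ext => i; rewrite -rsum_scal; apply: rsum_ext => s1; by rewrite rsum_scal.
Qed.

Lemma rsum2_dsa (S A : finType) (F : S -> A -> R) s a :
  rsum (fun s0 => rsum (fun a0 => (if (s0 == s) && (a0 == a) then 1 else 0) * F s0 a0)) = F s a.
Proof. rewrite -(rsum_delta (fun s0 => F s0 a) s); apply: rsum_ext => s0.
case: (s0 == s) => /=; first exact: rsum_delta'.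
transitivity (rsum (fun _ : A => 0)); [apply: rsum_ext => a0; ring | exact: rsum_0]. Qed.


Lemma rho_occ (S A : finType) (P : S -> A -> S -> R) (rho0 : S -> R) g (pi : S -> A -> R) s : stoch P -> is_policy pi -> 0 <= g < 1 ->
  rho P rho0 g pi s = rsum (fun a => occ P g pi (fun s a => rho0 s * pi s a) s a).
Proof. move=> HP Hpi Hg. have Hg0 : 0 <= g by case: Hg. rewrite /rho.
have -> : (fun t => g ^ t * rsum (fun a => sa_dist P pi (fun s0 a0 => rho0 s0 * pi s0 a0) t s a)) =
  (fun t => rsum (fun a => g ^ t * sa_dist P pi (fun s0 a0 => rho0 s0 * pi s0 a0) t s a)).
  apply: functional_extensionality => t; by rewrite rsum_scal.
rewrite (@series_rsum _ _ (fun _ => Cn (fun s0 a0 => rho0 s0 * pi s0 a0)) _ Hg) //.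
move=> a t; exact: term_bound1. Qed.

Lemma occ_rho (S A : finType) (P : S -> A -> S -> R) (rho0 : S -> R) g (pi : S -> A -> R) s a :
  stoch P -> is_policy pi -> 0 <= g < 1 ->
  occ P g pi (fun s a => rho0 s * pi s a) s a = rho P rho0 g pi s * pi s a.
Proof. move=> HP Hpi Hg.
have Hc : forall s a, occ P g pi (fun s a => rho0 s * pi s a) s a =
   (rho0 s + g * rsum (fun s0 => rsum (fun a0 => occ P g pi (fun s a => rho0 s * pi s a) s0 a0 * P s0 a0 s))) * pi s a.
  move=> s1 a1; rewrite occ_fwd //; ring.
rewrite rho_occ // (rsum_ext (fun a => Hc s a)) rsum_scal.
case: Hpi => _ ->. rewrite Rmult_1_r; exact: Hc. Qed.

Lemma rho_fwd (S A : finType) (P : S -> A -> S -> R) (rho0 : S -> R) g (pi : S -> A -> R) s' :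
  stoch P -> is_policy pi -> 0 <= g < 1 ->
  rho P rho0 g pi s' = rho0 s' + g * rsum (fun s => rsum (fun a => rho P rho0 g pi s * pi s a * P s a s')).
Proof. move=> HP Hpi Hg.
rewrite rho_occ // (rsum_ext (fun a => occ_fwd _ s' a HP Hpi Hg)) rsum_add rsum_scal.
have [_ Hs] := Hpi. rewrite Hs Rmult_1_r rsum_scal Hs Rmult_1_r.
f_equal; f_equal; apply: rsum_ext => s; apply: rsum_ext => a; by rewrite occ_rho. Qed.

Lemma rho_ge (S A : finType) (P : S -> A -> S -> R) (rho0 : S -> R) g (pi : S -> A -> R) s :
  stoch P -> is_policy pi -> 0 <= g < 1 -> (forall s, 0 <= rho0 s) ->
  rho0 s <= rho P rho0 g pi s.
Proof. move=> HP Hpi Hg H0. rewrite rho_occ //.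
have [Hp Hs] := Hpi.
have -> : rho0 s = rsum (fun a => rho0 s * pi s a) by rewrite rsum_scal Hs Rmult_1_r.
apply: rsum_le => a; apply: (@occ_ge S A P g pi (fun s a => rho0 s * pi s a)) => // s1 a1.
apply: Rmult_le_pos; [exact: H0 | exact: Hp]. Qed.

Lemma rho_sum (S A : finType) (P : S -> A -> S -> R) (rho0 : S -> R) g (pi : S -> A -> R) :
  stoch P -> is_policy pi -> 0 <= g < 1 -> rsum rho0 = 1 ->
  (1 - g) * rsum (fun s => rho P rho0 g pi s) = 1.
Proof. move=> HP Hpi Hg H1.
have E : rsum (fun s => rho P rho0 g pi s) = 1 + g * rsum (fun s => rho P rho0 g pi s).
  rewrite {1}(rsum_ext (fun s => rho_fwd rho0 s HP Hpi Hg)) rsum_add rsum_scal H1.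
  f_equal; f_equal. rewrite (rsum_P (fun s a => rho P rho0 g pi s * pi s a) HP).
  apply: rsum_ext => s; rewrite rsum_scal; case: Hpi => _ ->; ring.
rewrite Rmult_minus_distr_r Rmult_1_l {1}E; ring. Qed.

Lemma eta_rho (S A : finType) (P : S -> A -> S -> R) (rw : S -> A -> R) (rho0 : S -> R) g (pi : S -> A -> R) :
  stoch P -> is_policy pi -> 0 <= g < 1 ->
  eta P rw rho0 g pi = rsum (fun s => rho P rho0 g pi s * rsum (fun a => pi s a * rw s a)).
Proof. move=> HP Hpi Hg. rewrite /eta disc_occ //; apply: rsum_ext => s.
rewrite -rsum_scal; apply: rsum_ext => a; rewrite occ_rho //; ring. Qed.


Lemma Q_bell (S A : finType) (P : S -> A -> S -> R) (rw : S -> A -> R) g (pi : S -> A -> R) s a :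
  stoch P -> is_policy pi -> 0 <= g < 1 ->
  Qf P rw g pi s a = rw s a + g * rsum (fun s' => P s a s' * Vf P rw g pi s').
Proof. move=> HP Hpi Hg. rewrite /Qf disc_occ //.
set d := (fun s0 a0 => if (s0 == s) && (a0 == a) then 1 else 0).
have E : forall s1 a1, occ P g pi d s1 a1 =
   d s1 a1 + g * rsum (fun s' => P s a s' * occ P g pi (fun s0 a0 => if s0 == s' then pi s' a0 else 0) s1 a1).
  move=> s1 a1; rewrite occ_shift //; f_equal; f_equal.
  apply: occ_lin => // s2 a2 /=.
  rewrite /d rsum2_dsa.
  rewrite (rsum_ext (g := fun s' => if s' == s2 then P s a s' * pi s' a2 else 0)); last first.
    move=> s'; rewrite eq_sym; case: (s' == s2); ring.
  by rewrite rsum_delta.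
rewrite (rsum_ext (fun s1 => rsum_ext (fun a1 => f_equal (fun x => x * rw s1 a1) (E s1 a1)))).
have -> : (fun s1 => rsum (fun a1 => (d s1 a1 + g * rsum (fun s' => P s a s' *
      occ P g pi (fun s0 a0 => if s0 == s' then pi s' a0 else 0) s1 a1)) * rw s1 a1)) =
   (fun s1 => rsum (fun a1 => d s1 a1 * rw s1 a1) + g * rsum (fun a1 => rsum (fun s' => P s a s' *
      occ P g pi (fun s0 a0 => if s0 == s' then pi s' a0 else 0) s1 a1) * rw s1 a1)).
  apply: functional_extensionality => s1; rewrite -rsum_scal -rsum_add. apply rsum_ext => a1; ring.
rewrite rsum_add /d rsum2_dsa rsum_scal; f_equal; f_equal.
rewrite rsum2_lin; apply: rsum_ext => s'; rewrite /Vf disc_occ //. Qed.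

Lemma V_Q (S A : finType) (P : S -> A -> S -> R) (rw : S -> A -> R) g (pi : S -> A -> R) s :
  stoch P -> is_policy pi -> 0 <= g < 1 ->
  Vf P rw g pi s = rsum (fun a => pi s a * Qf P rw g pi s a).
Proof. move=> HP Hpi Hg. rewrite /Vf disc_occ //.
have Hnu : forall s0 a0, (if s0 == s then pi s a0 else 0) =
   rsum (fun a => pi s a * (if (s0 == s) && (a0 == a) then 1 else 0)).
  move=> s0 a0; case: (s0 == s) => /=.
    rewrite -(rsum_delta' (pi s) a0); apply: rsum_ext => a; rewrite eq_sym; ring.
  transitivity (rsum (fun _ : A => 0)); [by rewrite rsum_0 | apply: rsum_ext => a; ring].
rewrite (rsum_ext (fun s1 => rsum_ext (fun a1 => f_equal (fun x => x * rw s1 a1)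
   (@occ_lin S A A P g pi _ (fun a => pi s a) (fun a s0 a0 => if (s0 == s) && (a0 == a) then 1 else 0) s1 a1 HP Hpi Hg Hnu)))).
rewrite rsum2_lin; apply: rsum_ext => a; rewrite /Qf disc_occ //. Qed.

Lemma eta_V (S A : finType) (P : S -> A -> S -> R) (rw : S -> A -> R) (rho0 : S -> R) g (pi : S -> A -> R) :
  stoch P -> is_policy pi -> 0 <= g < 1 ->
  eta P rw rho0 g pi = rsum (fun s => rho0 s * Vf P rw g pi s).
Proof. move=> HP Hpi Hg. rewrite /eta disc_occ //.
have Hnu : forall s0 a0, rho0 s0 * pi s0 a0 = rsum (fun s => rho0 s * (if s0 == s then pi s a0 else 0)).
  move=> s0 a0. rewrite -(rsum_delta (fun s => rho0 s * pi s a0) s0); apply: rsum_ext => s.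
  have [->|Hne] := eqVneq s s0; ring.
rewrite (rsum_ext (fun s1 => rsum_ext (fun a1 => f_equal (fun x => x * rw s1 a1)
   (@occ_lin S A S P g pi _ rho0 (fun s s0 a0 => if s0 == s then pi s a0 else 0) s1 a1 HP Hpi Hg Hnu)))).
rewrite rsum2_lin; apply: rsum_ext => s; rewrite /Vf disc_occ //. Qed.


Lemma adv0 (S A : finType) (P : S -> A -> S -> R) (rw : S -> A -> R) g (pi : S -> A -> R) s :
  stoch P -> is_policy pi -> 0 <= g < 1 ->
  rsum (fun a => pi s a * Adv P rw g pi s a) = 0.
Proof. move=> HP Hpi Hg. rewrite /Adv.
rewrite (rsum_ext (g := fun a => pi s a * Qf P rw g pi s a - Vf P rw g pi s * pi s a)); last by move=> a; ring.
rewrite rsum_minus rsum_scal -V_Q //. case: Hpi => _ ->; ring. Qed.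

Lemma pdl (S A : finType) (P : S -> A -> S -> R) (rw : S -> A -> R) (rho0 : S -> R) g (pi pit : S -> A -> R) :
  stoch P -> is_policy pi -> is_policy pit -> 0 <= g < 1 ->
  eta P rw rho0 g pit - eta P rw rho0 g pi =
  rsum (fun s => rho P rho0 g pit s * rsum (fun a => pit s a * Adv P rw g pi s a)).
Proof. move=> HP Hpi Hpit Hg.
set V := Vf P rw g pi. set rt := rho P rho0 g pit.
set B := fun s => rsum (fun a => pit s a * rsum (fun s' => P s a s' * V s')).
have H1 : rsum (fun s' => rt s' * V s') - rsum (fun s' => rho0 s' * V s') = g * rsum (fun s => rt s * B s).
  rewrite -rsum_minus.
  rewrite (rsum_ext (g := fun s' => rsum (fun s => rsum (fun a => g * (rt s * pit s a * P s a s' * V s'))))); last first.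
    move=> s'; rewrite /rt rho_fwd // -/rt.
    transitivity ((g * V s') * rsum (fun s => rsum (fun a => rt s * pit s a * P s a s'))); first ring.
    rewrite -rsum_scal; apply: rsum_ext => s; rewrite -rsum_scal; apply: rsum_ext => a; ring.
  rewrite -rsum_scal rsum_exch; apply: rsum_ext => s. rewrite rsum_exch /B -!rsum_scal.
  apply: rsum_ext => a. rewrite -!rsum_scal; apply: rsum_ext => s'; ring.
have H2 : forall s, rsum (fun a => pit s a * Adv P rw g pi s a) =
    rsum (fun a => pit s a * rw s a) + g * B s - V s.
  move=> s. rewrite /Adv.
  rewrite (rsum_ext (g := fun a => (pit s a * rw s a + g * (pit s a * rsum (fun s' => P s a s' * V s'))) - V s * pit s a)); last first.
    move=> a; rewrite Q_bell // -/V; ring.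
  rewrite rsum_minus rsum_add rsum_scal rsum_scal. case: Hpit => _ ->; rewrite /B; ring.
rewrite (rsum_ext (fun s => f_equal (fun x => rt s * x) (H2 s))).
rewrite (rsum_ext (g := fun s => (rt s * rsum (fun a => pit s a * rw s a) + g * (rt s * B s)) - rt s * V s)); last by move=> s; ring.
rewrite rsum_minus rsum_add rsum_scal eta_rho // eta_V // -/rt -/V.
lra. Qed.


Lemma rho_ge0 (S A : finType) (P : S -> A -> S -> R) (rho0 : S -> R) g (pi : S -> A -> R) s :
  stoch P -> is_policy pi -> 0 <= g < 1 -> (forall s, 0 <= rho0 s) ->
  0 <= rho P rho0 g pi s.
Proof. move=> HP Hpi Hg H0; apply: Rle_trans; [exact: H0 | exact: rho_ge]. Qed.

Lemma delta_bound (S A : finType) (P : S -> A -> S -> R) (rho0 : S -> R) g (pi pit : S -> A -> R) :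
  stoch P -> is_policy pi -> is_policy pit -> 0 <= g < 1 -> (forall s, 0 <= rho0 s) ->
  (1 - g) * rsum (fun s => Rabs (rho P rho0 g pit s - rho P rho0 g pi s)) <=
  g * rsum (fun s => rho P rho0 g pi s * rsum (fun a => Rabs (pit s a - pi s a))).
Proof. move=> HP Hpi Hpit Hg H0.
set rt := rho P rho0 g pit. set r := rho P rho0 g pi.
have Hr : forall s, 0 <= r s by move=> s; exact: rho_ge0.
have [HP0 _] := HP. have [Hpit0 _] := Hpit.
have E : forall s', rt s' - r s' = g * rsum (fun s => rsum (fun a =>
     ((rt s - r s) * pit s a + r s * (pit s a - pi s a)) * P s a s')).
  move=> s'. have E1 := rho_fwd rho0 s' HP Hpit Hg. have E2 := rho_fwd rho0 s' HP Hpi Hg.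
  rewrite -/rt -/r in E1 E2. rewrite E1 E2.
  have -> : rsum (fun s => rsum (fun a => ((rt s - r s) * pit s a + r s * (pit s a - pi s a)) * P s a s'))
     = rsum (fun s => rsum (fun a => rt s * pit s a * P s a s')) - rsum (fun s => rsum (fun a => r s * pi s a * P s a s')).
    rewrite -rsum_minus; apply: rsum_ext => s; rewrite -rsum_minus; apply: rsum_ext => a; ring.
  ring.
have Hle : rsum (fun s' => Rabs (rt s' - r s')) <=
   g * rsum (fun s => rsum (fun a => Rabs (rt s - r s) * pit s a + r s * Rabs (pit s a - pi s a))).
  apply: Rle_trans.
    apply: (@rsum_le _ _ (fun s' => g * rsum (fun s => rsum (fun a =>
       (Rabs (rt s - r s) * pit s a + r s * Rabs (pit s a - pi s a)) * P s a s')))) => s'.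
    rewrite E Rabs_mult (Rabs_pos_eq g); last by case: Hg.
    apply: Rmult_le_compat_l; first by case: Hg.
    apply: Rle_trans; first exact: rsum_abs. apply: rsum_le => s.
    apply: Rle_trans; first exact: rsum_abs. apply: rsum_le => a.
    rewrite Rabs_mult (Rabs_pos_eq (P s a s')) //.
    apply: Rmult_le_compat_r => //.
    apply: Rle_trans; first exact: Rabs_triang.
    rewrite !Rabs_mult (Rabs_pos_eq (pit s a)) // (Rabs_pos_eq (r s)) //; exact: Rle_refl.
  rewrite rsum_scal (rsum_P (fun s a => Rabs (rt s - r s) * pit s a + r s * Rabs (pit s a - pi s a)) HP).
  exact: Rle_refl.
have E3 : rsum (fun s => rsum (fun a => Rabs (rt s - r s) * pit s a + r s * Rabs (pit s a - pi s a))) =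
   rsum (fun s => Rabs (rt s - r s)) + rsum (fun s => r s * rsum (fun a => Rabs (pit s a - pi s a))).
  rewrite -rsum_add; apply: rsum_ext => s; rewrite rsum_add !rsum_scal; case: Hpit => _ ->; ring.
rewrite E3 in Hle. lra. Qed.

Lemma dTV_le1 (A : finType) (p q : A -> R) : (forall a, 0 <= p a) -> (forall a, 0 <= q a) ->
  rsum p = 1 -> rsum q = 1 -> dTV p q <= 1.
Proof. move=> Hp Hq H1 H2. rewrite /dTV.
have : rsum (fun a => Rabs (p a - q a)) <= rsum (fun a => p a + q a).
  apply: rsum_le => a. have := Hp a; have := Hq a. move=> h1 h2.
  apply: Rabs_le; split; lra.
rewrite rsum_add H1 H2 => h; lra. Qed.

Lemma dTV_ge0 (A : finType) (p q : A -> R) : 0 <= dTV p q.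
Proof. rewrite /dTV; apply: Rmult_le_pos; first lra. apply: rsum_ge0 => a; exact: Rabs_pos. Qed.

Unset Implicit Arguments.


Lemma div_mono (k a b : R) : 0 < a -> a <= b -> 0 <= k -> k / b <= k / a.
Proof. move=> Ha Hab Hk; rewrite /Rdiv; apply: Rmult_le_compat_l => //.
apply: Rinv_le_contravar => //. Qed.

Lemma ratio_lb (N D c k : R) : 0 < D -> 0 < c -> c * (N - D) >= - k -> N / D >= 1 - k / (c * D).
Proof. move=> HD Hc H.
have E : N / D - (1 - k / (c * D)) = (c * (N - D) + k) / (c * D) by field; lra.
have : 0 <= (c * (N - D) + k) / (c * D).
  rewrite /Rdiv; apply: Rmult_le_pos; first lra.
  apply: Rlt_le; apply: Rinv_0_lt_compat; nra.
lra. Qed.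

Theorem mainTheorem3 (S A : finType) (P : S -> A -> S -> R) (rw : S -> A -> R)
  (rho0 : S -> R) (gamma : R)
  (Hmdp : valid_mdp P rw rho0 gamma)
  (pi : S -> A -> R) (Hpi : is_policy pi)
  (Astar : R)
  (HAstar_ub : forall pi', is_policy pi' -> policy_adv P rw rho0 gamma pi pi' <= Astar)
  (HAstar_att : exists pi', is_policy pi' /\ policy_adv P rw rho0 gamma pi pi' = Astar)
  (HApos : 0 < Astar)
  (delta : R) (Hdelta : 0 < delta)
  (pit : S -> A -> R) (Hpit : is_policy pit)
  (Hfeas : exp_tv P rho0 gamma pi pit <= delta)
  (Hopt : forall pi', is_policy pi' -> exp_tv P rho0 gamma pi pi' <= delta ->
            surrogate P rw rho0 gamma pi pi' <= surrogate P rw rho0 gamma pi pit)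
  (p0 : R) (Hp0_lb : forall s, p0 <= rho0 s) (Hp0_att : exists s, rho0 s = p0)
  (Abar : R) (HAbar_ub : forall s a, Rabs (Adv P rw gamma pi s a) <= Abar)
  (HAbar_att : exists s a, Rabs (Adv P rw gamma pi s a) = Abar) :
  let r := (eta P rw rho0 gamma pit - eta P rw rho0 gamma pi) /
           (surrogate P rw rho0 gamma pi pit - surrogate P rw rho0 gamma pi pi) in
  r >= Rmin (1 - 4 * Abar * gamma * delta ^ 2 /
                   (p0 ^ 2 * (1 - gamma) ^ 2 * Astar))
            (1 - 4 * Abar * gamma * delta /
                   (p0 ^ 2 * (1 - gamma) ^ 3 * Astar)).
Proof.
move=> ratio; rewrite /ratio {ratio}.
move: Hmdp => [HP0 [HP1 [Hr0 [Hr1 [_ Hg]]]]].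
have HP : stoch P := conj HP0 HP1.
have Hg' : 0 <= gamma < 1 by lra.
have Hr0' : forall s, 0 <= rho0 s by move=> s; apply: Rlt_le.
have Hsur : forall pi', surrogate P rw rho0 gamma pi pi' =
   eta P rw rho0 gamma pi + policy_adv P rw rho0 gamma pi pi' by [].
have PA0 : policy_adv P rw rho0 gamma pi pi = 0.
  rewrite /policy_adv (rsum_ext (g := fun _ => 0)); first exact: rsum_0.
  move=> s; rewrite adv0 //; ring.
set rr := rho P rho0 gamma pi. set rt := rho P rho0 gamma pit.
have Hsum : (1 - gamma) * rsum rr = 1 by exact: rho_sum.
have Hrge : forall s, rho0 s <= rr s by move=> s; exact: rho_ge.
have Hrge0 : forall s, 0 <= rr s by move=> s; exact: rho_ge0.
have [s0 Hs0] := Hp0_att.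
have Hp0pos : 0 < p0 by rewrite -Hs0.
have Hp0le1 : p0 <= 1 by rewrite -Hs0 -Hr1; exact: rsum_single.
have HAbar0 : 0 <= Abar by case: HAbar_att => s [a <-]; exact: Rabs_pos.
have [ps [Hps HpsA]] := HAstar_att.
set t := Rmin 1 (delta * (1 - gamma)).
have Ht0 : 0 < t by apply: Rmin_glb_lt; nra.
have Ht1 : t <= 1 by apply: Rmin_l.
have Htd : t <= delta * (1 - gamma) by apply: Rmin_r.
set pm := fun s a => (1 - t) * pi s a + t * ps s a.
have Hpm : is_policy pm.
  case: Hpi => Hpi0 Hpi1; case: Hps => Hps0 Hps1; split.
    move=> s a; rewrite /pm; have := Hpi0 s a; have := Hps0 s a; nra.
  move=> s; rewrite /pm rsum_add !rsum_scal Hpi1 Hps1; ring.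
have PApm : policy_adv P rw rho0 gamma pi pm = t * Astar.
  rewrite -HpsA /policy_adv -rsum_scal; apply: rsum_ext => s.
  rewrite (rsum_ext (g := fun a => (1 - t) * (pi s a * Adv P rw gamma pi s a) + t * (ps s a * Adv P rw gamma pi s a))); last by move=> a; rewrite /pm; ring.
  rewrite rsum_add !rsum_scal adv0 //; ring.
have TVpm : exp_tv P rho0 gamma pi pm <= delta.
  rewrite /exp_tv -/rr. apply: (@Rle_trans _ (rsum (fun s => t * rr s))).
    apply: rsum_le => s.
    have Ed : dTV (pi s) (pm s) = t * dTV (pi s) (ps s).
      rewrite /dTV (rsum_ext (g := fun a => t * Rabs (pi s a - ps s a))); last first.
        move=> a; rewrite /pm.
        have -> : pi s a - ((1 - t) * pi s a + t * ps s a) = t * (pi s a - ps s a) by ring.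
        rewrite Rabs_mult Rabs_pos_eq //; lra.
      rewrite rsum_scal; ring.
    have Hd1 : dTV (pi s) (ps s) <= 1.
      case: Hpi => Hpi0 Hpi1; case: Hps => Hps0 Hps1; exact: dTV_le1.
    have Hd0 := dTV_ge0 (pi s) (ps s).
    rewrite Ed; have := Rmult_le_pos _ _ (Rlt_le _ _ Ht0) (Hrge0 s); nra.
  rewrite rsum_scal.
  have : t * rsum rr <= delta * (1 - gamma) * rsum rr.
    apply: Rmult_le_compat_r => //; exact: rsum_ge0.
  nra.
set D := policy_adv P rw rho0 gamma pi pit.
have HD : t * Astar <= D.
  have := Hopt pm Hpm TVpm; rewrite !Hsur PApm -/D; lra.
have Hden : surrogate P rw rho0 gamma pi pit - surrogate P rw rho0 gamma pi pi = D.
  rewrite !Hsur PA0 -/D; ring.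
rewrite Hden (pdl rw rho0 HP Hpi Hpit Hg') -/rt.
set Ab := fun s => rsum (fun a => pit s a * Adv P rw gamma pi s a).
have HDe : D = rsum (fun s => rr s * Ab s) by [].
have HAb : forall s, p0 * Rabs (Ab s) <= 2 * Abar * delta.
  move=> s.
  have E1 : Ab s = rsum (fun a => (pit s a - pi s a) * Adv P rw gamma pi s a).
    rewrite (rsum_ext (g := fun a => pit s a * Adv P rw gamma pi s a - pi s a * Adv P rw gamma pi s a)); last by move=> a; ring.
    rewrite rsum_minus adv0 // /Ab; ring.
  have E2 : Rabs (Ab s) <= Abar * rsum (fun a => Rabs (pi s a - pit s a)).
    rewrite E1 -rsum_scal; apply: Rle_trans; first exact: rsum_abs.
    apply: rsum_le => a; rewrite Rabs_mult Rabs_minus_sym Rmult_comm.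
    apply: Rmult_le_compat_r; [exact: Rabs_pos | exact: HAbar_ub].
  have E3 : rr s * dTV (pi s) (pit s) <= delta.
    apply: Rle_trans; last exact: Hfeas.
    rewrite /exp_tv -/rr. apply: (@rsum_single _ (fun s => rr s * dTV (pi s) (pit s)) s) => x.
    apply: Rmult_le_pos; [exact: Hrge0 | exact: dTV_ge0].
  have Hd0 := dTV_ge0 (pi s) (pit s).
  have E4 : rsum (fun a => Rabs (pi s a - pit s a)) = 2 * dTV (pi s) (pit s) by rewrite /dTV; field.
  rewrite E4 in E2.
  have : p0 * dTV (pi s) (pit s) <= rr s * dTV (pi s) (pit s).
    apply: Rmult_le_compat_r => //; apply: Rle_trans; [exact: Hp0_lb | exact: Hrge].
  have := Rabs_pos (Ab s). nra.
have HDel := @delta_bound S A P rho0 gamma pi pit HP Hpi Hpit Hg' Hr0'.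
rewrite -/rr -/rt in HDel.
have Hex : rsum (fun s => rr s * rsum (fun a => Rabs (pit s a - pi s a))) = 2 * exp_tv P rho0 gamma pi pit.
  rewrite /exp_tv -/rr -rsum_scal; apply: rsum_ext => s; rewrite /dTV.
  rewrite (rsum_ext (f := fun a => Rabs (pit s a - pi s a)) (g := fun a => Rabs (pi s a - pit s a))); last by move=> a; exact: Rabs_minus_sym.
  field.
rewrite Hex in HDel.
have HND : p0 * (rsum (fun s => rt s * Ab s) - D) >= - (2 * Abar * delta * rsum (fun s => Rabs (rt s - rr s))).
  rewrite HDe -rsum_minus -rsum_scal.
  have : - (2 * Abar * delta * rsum (fun s => Rabs (rt s - rr s))) <= rsum (fun s => p0 * (rt s * Ab s - rr s * Ab s)).
    rewrite -rsum_scal -rsum_opp; apply: rsum_le => s.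
    have := HAb s. have := Rabs_pos (rt s - rr s). 
    have h := Rle_abs (- ((rt s - rr s) * Ab s)). rewrite Rabs_Ropp Rabs_mult in h.
    move=> h1 h2. have : Rabs (rt s - rr s) * (p0 * Rabs (Ab s)) <= Rabs (rt s - rr s) * (2 * Abar * delta).
      apply: Rmult_le_compat_l => //.
    nra.
  lra.
have Hc : 0 < p0 * (1 - gamma) by nra.
have Hk : p0 * (1 - gamma) * (rsum (fun s => rt s * Ab s) - D) >= - (4 * Abar * gamma * delta ^ 2).
  have Hs0' : 0 <= rsum (fun s => Rabs (rt s - rr s)) by apply: rsum_ge0 => s; exact: Rabs_pos.
  have : (1 - gamma) * (2 * Abar * delta * rsum (fun s => Rabs (rt s - rr s))) <= 4 * Abar * gamma * delta ^ 2.
    have : 2 * Abar * delta * ((1 - gamma) * rsum (fun s => Rabs (rt s - rr s))) <= 2 * Abar * delta * (gamma * (2 * delta)).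
      apply: Rmult_le_compat_l; first nra. nra.
    simpl; nra.
  nra.
have HDpos : 0 < D by nra.
have Hrat := ratio_lb _ _ _ _ HDpos Hc Hk.
have Hc1 : p0 * (1 - gamma) <= 1 by nra.
have Hk0 : 0 <= 4 * Abar * gamma * delta ^ 2.
  apply: Rmult_le_pos; [apply: Rmult_le_pos; [apply: Rmult_le_pos; lra | lra] | apply: pow_le; lra].
case: (Rle_dec 1 (delta * (1 - gamma))) => Hcase.
- have Ht : t = 1 by rewrite /t Rmin_left.
  rewrite Ht in HD.
  apply: Rge_trans; last by apply: Rle_ge; apply: Rmin_l.
  apply: Rge_trans; first exact: Hrat.
  apply: Rle_ge. apply: Rplus_le_compat_l; apply: Ropp_le_contravar.
  have -> : p0 ^ 2 * (1 - gamma) ^ 2 * Astar = (p0 * (1 - gamma)) * (p0 * (1 - gamma)) * Astar by ring.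
  apply: div_mono => //. 
    apply: Rmult_lt_0_compat => //; nra.
  rewrite Rmult_assoc; apply: Rmult_le_compat_l; first lra.
  nra.
- have Ht : t = delta * (1 - gamma) by rewrite /t Rmin_right; lra.
  rewrite Ht in HD.
  apply: Rge_trans; last by apply: Rle_ge; apply: Rmin_r.
  apply: Rge_trans; first exact: Hrat.
  apply: Rle_ge. apply: Rplus_le_compat_l; apply: Ropp_le_contravar.
  have -> : 4 * Abar * gamma * delta / (p0 ^ 2 * (1 - gamma) ^ 3 * Astar) =
     4 * Abar * gamma * delta ^ 2 / ((p0 * (1 - gamma)) * (p0 * (1 - gamma)) * (delta * (1 - gamma) * Astar)).
    field; repeat split; lra.
  apply: div_mono => //.
    apply: Rmult_lt_0_compat; first nra. nra.
  rewrite Rmult_assoc; apply: Rmult_le_compat_l; first lra.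
  have : p0 * (1 - gamma) * (delta * (1 - gamma) * Astar) <= delta * (1 - gamma) * Astar.
    have : 0 <= delta * (1 - gamma) * Astar by nra.
    nra.
  lra.
Qed.
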